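(* Let $a,b\in\mathbb{R}$, let $w(x)=ax+b$, and let $\mathcal{I}\subset\mathbb{R}$ be the set of points where $w>0$. For $\sigma>0$ and $x,y\in\mathbb{R}$ with $w(y)\neq 0$ define the one-step transition density $$p_1(x\mid y,\sigma,a,b)=\frac{k_\sigma(x;y)\,w(x)}{\int_{\mathbb{R}}k_\sigma(z;y)\,w(z)\,\mathrm{d}z},$$ where $k_\sigma(\cdot;y)$ is the Gaussian density with mean $y$ and standard deviation $\sigma$, and for $n\in\mathbb{N}$ define the $n$-step density by the Chapman–Kolmogorov formula $$p_n(x_n\mid x_0,\sigma,a,b)=\int_{\mathbb{R}^{n-1}}\prod_{k=1}^{n}p_1(x_k\mid x_{k-1},\sigma,a,b)\,\mathrm{d}x_1\cdots\mathrm{d}x_{n-1}.$$ Then, restricted to the domain $\mathcal{I}$, the movement model is robust of degree $n$ for every $n\in\mathbb{N}$ with parameter transformation $g_n(\sigma,a,b)=(\sqrt{n}\,\sigma,a,b)$; that is, for every $n\in\mathbb{N}$, every $\sigma>0$ and all $x,y\in\mathcal{I}$, $$p_n(x\mid y,\sigma,a,b)=p_1(x\mid y,\sqrt{n}\,\sigma,a,b).$$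
   Context: This concerns a one-dimensional discrete-time Markov movement model (locations $X_t\in\mathbb{R}$ at times $0,\tau,2\tau,\dots$) whose one-step transition density is a Gaussian movement kernel multiplied by a spatial weighting function $w$ and renormalized, as written in the claim. A model with one-step density $p_1(\cdot\mid\cdot,\bm\theta)$ and $n$-step density $p_n$ is called robust of degree $n$ if there is an injective map $g_n$ on the parameter space with $p_n(x\mid y,\bm\theta)=p_1(x\mid y,g_n(\bm\theta))$ for all $x,y$ (here for all $x,y$ in the restricted domain). *)

(* Defs.v *)
From HB Require Import structures.
From mathcomp Require Import all_boot all_order all_algebra.
From mathcomp Require Import all_classical all_reals all_analysis.
Set Implicit Arguments. Unset Strict Implicit. Unset Printing Implicit Defensive.
Import Order.TTheory GRing.Theory Num.Theory.
Import numFieldNormedType.Exports.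
Local Open Scope classical_set_scope.
Local Open Scope ring_scope.

Definition wlin {R : realType} (a b x : R) : R := a * x + b.

Definition kern {R : realType} (s y x : R) : R := normal_pdf y s x.

Definition p1 {R : realType} (s a b x y : R) : R :=
  kern s y x * wlin a b x /
  (\int[@lebesgue_measure R]_(z in [set: R]) (kern s y z * wlin a b z)).

(* iterated Lebesgue integral over R^m: integrates f (z_1 :: ... :: z_m :: [::])
   with respect to z_1, ..., z_m (innermost z_m) *)
Fixpoint iter_int {R : realType} (m : nat) (f : seq R -> R) : R :=
  match m with
  | 0%N => f [::]
  | m'.+1 => \int[@lebesgue_measure R]_(z in [set: R])
               iter_int m' (fun s => f (z :: s))
  end.

Definition pn {R : realType} (n : nat) (s a b xn x0 : R) : R :=
  iter_int n.-1 (fun xs : seq R =>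
    let pts := x0 :: rcons xs xn in
    \prod_(k < n) p1 s a b (nth 0 pts k.+1) (nth 0 pts k)).

(* Main.v *)
Require Import Defs.
From HB Require Import structures.
From mathcomp Require Import all_boot all_order all_algebra.
From mathcomp Require Import all_classical all_reals all_analysis.
From mathcomp Require Import ring lra measurable_realfun.
Import Order.TTheory GRing.Theory Num.Theory.
Import numFieldNormedType.Exports.
Local Open Scope classical_set_scope.
Local Open Scope ring_scope.

Section S.
Context {R : realType}.
Notation mu := (@lebesgue_measure R).

Definition nf (c s x : R) := expR (- (x - c) ^+ 2 / (s ^+ 2 *+ 2)).

Lemma is_derive_nf (c s x : R) : is_derive x 1 (nf c s) (nf c s x * (- (x - c) / s ^+ 2)).
Proof.
have -> : nf c s = expR \o (fun x => - (x - c) ^+ 2 / (s ^+ 2 *+ 2)) by [].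
apply: is_derive_eq.
rewrite !scaler0 add0r !subr0 !scaler1 /=; congr (_ * _).
have [->|s0] := eqVneq s 0.
  by rewrite expr0n /= mul0rn invr0 scale0r mulr0.
change ((s ^+ 2 *+ 2)^-1 * - (x - c + (x - c)) = - (x - c) / s ^+ 2).
rewrite -mulr_natr; field.
by [].
Qed.

#[local] Existing Instance is_derive_nf.

Lemma derivable_nf (c s x : R) : derivable (nf c s) x 1.
Proof. by case: (is_derive_nf c s x). Qed.

Lemma continuous_nf (c s : R) : continuous (nf c s).
Proof.
by move=> x; apply/differentiable_continuous/derivable1_diffP/derivable_nf.
Qed.

Lemma nf_gauss (c s x : R) : s != 0 ->
  nf c s x = gauss_fun ((x - c) / Num.sqrt (s ^+ 2 *+ 2)).
Proof.
move=> s0; rewrite /nf /gauss_fun; congr expR.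
rewrite mulNr exprMn exprVn sqr_sqrtr// ?pmulrn_lge0// ?sqr_ge0//.
Qed.

Lemma cvg_nf (c s : R) : s != 0 -> nf c s x @[x --> +oo] --> 0.
Proof.
move=> s0.
have -> : nf c s = gauss_fun \o (fun x => (x - c) / Num.sqrt (s ^+ 2 *+ 2)).
  by apply/funext => x; rewrite nf_gauss.
apply: (cvg_comp _ gauss_fun); last exact: cvg_gauss_fun.

apply/gt0_cvgMly; last exact: cvg_addrr.
by rewrite invr_gt0// sqrtr_gt0 pmulrn_lgt0// exprn_even_gt0.
Qed.

Lemma continuous_fnf (c s : R) : continuous (fun x : R => (x - c) * nf c s x).
Proof.
move=> x; apply: cvgM; last exact: continuous_nf.
by apply: cvgB; [exact: cvg_id| exact: cvg_cst].
Qed.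

Lemma half_int (c s : R) : s != 0 ->
  (\int[mu]_(x in `[c, +oo[) ((x - c) * nf c s x)%:E = (s ^+ 2)%:E)%E.
Proof.
move=> s0.
have dF (x : R) : is_derive x (1:R) (fun x => - s ^+ 2 * nf c s x) ((x - c) * nf c s x).
  apply: is_derive_eq.
  change (- s ^+ 2 * (nf c s x * (- (x - c) / s ^+ 2)) = (x - c) * nf c s x).
  by field.
rewrite (@ge0_continuous_FTC2y _ _ (fun x => - s ^+ 2 * nf c s x) _ 0).
- by rewrite /nf subrr expr0n /= oppr0 mul0r expR0 mulr1 add0e opprK.
- by move=> x cx; rewrite mulr_ge0 ?subr_ge0// expR_ge0.
- apply: continuous_subspaceT => x.
  exact: continuous_fnf.
- rewrite -[X in _ --> X](mulr0 (- s ^+ 2)).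
  by apply: cvgM; [exact: cvg_cst| exact: cvg_nf].
- by move=> x _; case: (dF x).
- apply: cvg_at_right_filter.
  by apply: cvgM; [exact: cvg_cst| exact: continuous_nf].
- by move=> x _; rewrite derive1E; apply: derive_val.
Qed.

Lemma left_int (y s : R) : s != 0 ->
  (\int[mu]_(x in `]-oo, y]) (- ((x - y) * nf y s x))%:E = (s ^+ 2)%:E)%E.
Proof.
move=> s0.
rewrite -[in `]-oo, y]](opprK y).
rewrite (@ge0_integration_by_substitutionNy _ (fun x => - ((x - y) * nf y s x))).
- rewrite -(@half_int (- y) s s0); apply: eq_integral => x _; congr EFin.
  by rewrite /= /nf opprK -opprD sqrrN -mulNr opprK.
- have cN : continuous (fun x : R => - ((x - y) * nf y s x)).
    by move=> z; apply: cvgN; exact: continuous_fnf.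
  exact: continuous_subspaceT.
- move=> x; rewrite in_itv/= opprK => xy.
  by rewrite -mulNr mulr_ge0// ?expR_ge0// oppr_ge0 subr_le0 ltW.
Qed.

Lemma mean_int (y s : R) : s != 0 ->
  mu.-integrable setT (EFin \o (fun x => (x - y) * nf y s x)) /\
  \int[mu]_(x in setT) ((x - y) * nf y s x) = 0.
Proof.
move=> s0.
set f := fun x => (x - y) * nf y s x.
have mf : measurable_fun setT f := continuous_measurable_fun (continuous_fnf y s).
pose B := `[y, +oo[%classic.
have mB : measurable B by exact: measurable_itv.
have mA : measurable (~` B) by exact: measurableC.
have AB : ~` B = `]-oo, y[%classic by rewrite setCitvr.
have setTE : [set: R] = ~` B `|` B by rewrite setvU.
have dis : [disjoint ~` B & B] by exact/disj_setPCr.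
have mfA : measurable_fun `]-oo, y[ (fun x => - f x).
  by apply: measurable_funTS; apply: measurableT_comp => //.
have intA : (\int[mu]_(x in ~` B) (- f x)%:E = (s ^+ 2)%:E)%E.
  rewrite AB integral_itv_bndo_bndc ?left_int//.
  exact/measurable_EFinP.
have intf : mu.-integrable setT (EFin \o f).
  apply/integrableP; split; first exact/measurable_EFinP.
  rewrite setTE ge0_integral_setU//; last first.
  - rewrite -setTE; apply: measurableT_comp => //.
    exact/measurable_EFinP.
  rewrite (_ : (\int[mu]_(x in ~` B) `|(f x)%:E|)%E = (s ^+ 2)%:E); last first.
    rewrite -intA AB; apply: eq_integral => x /set_mem /=; rewrite in_itv/= => xy.
    by rewrite /f /= ler0_norm// mulr_le0_ge0 ?expR_ge0// subr_le0 ltW.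
  rewrite (_ : (\int[mu]_(x in B) `|(f x)%:E|)%E = (s ^+ 2)%:E); last first.
    rewrite -(@half_int y s s0); apply: eq_integral => x; rewrite /B inE /= in_itv /= andbT => xy.
    by rewrite /f /= ger0_norm// mulr_ge0 ?expR_ge0// subr_ge0.
  by rewrite -EFinD ltry.
split => //.
rewrite setTE Rintegral_setU//; last by rewrite -setTE.
have -> : \int[mu]_(x in B) f x = s ^+ 2 by rewrite /Rintegral half_int.
have -> : \int[mu]_(x in ~` B) f x = - s ^+ 2.
  transitivity (\int[mu]_(x in ~` B) (-1 * (- f x))).
    by apply: eq_Rintegral => x _; rewrite mulN1r opprK.
  rewrite RintegralZl//; last first.
    have intfN : mu.-integrable setT (EFin \o (fun x => - f x)).
      have := integrableN intf.
      apply: eq_integrable; [exact: measurableT|move=> x _ /=].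
      by rewrite EFinN.
    exact: integrableS intfN.
  by rewrite /Rintegral intA /= mulN1r.
by rewrite addNr.
Qed.

Lemma kernE (s y x : R) : s != 0 -> kern s y x = normal_peak s * nf y s x.
Proof. by move=> s0; rewrite /kern /normal_pdf (negbTE s0). Qed.

Lemma integrable_kern (s y : R) : mu.-integrable setT (EFin \o kern s y).
Proof. exact: integrable_normal_pdf. Qed.

Lemma Rint_kern (s y : R) : \int[mu]_(z in setT) kern s y z = 1.
Proof. by rewrite /Rintegral /kern integral_normal_pdf. Qed.

Lemma intZ (k : R) (f : R -> R) : mu.-integrable setT (EFin \o f) ->
  mu.-integrable setT (EFin \o (fun x => k * f x)).
Proof.
move=> H; have := integrableZl measurableT k H.
by apply: eq_integrable => // x _ /=; rewrite EFinM.
Qed.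

Lemma Rint_kw (s a b y : R) : s != 0 ->
  \int[mu]_(z in setT) (kern s y z * wlin a b z) = wlin a b y.
Proof.
move=> s0; have [intf mean0] := @mean_int y s s0.
transitivity (\int[mu]_(z in setT) ((a * normal_peak s) * ((z - y) * nf y s z)
   + wlin a b y * kern s y z)).
  apply: eq_Rintegral => z _; rewrite kernE// /wlin; ring.
rewrite RintegralD//; last 2 first.
- exact: intZ.
- exact/intZ/integrable_kern.
by rewrite !RintegralZl// ?mean0 ?Rint_kern ?mulr0 ?add0r ?mulr1//; exact: integrable_kern.
Qed.

Lemma p1E (s a b x y : R) : s != 0 ->
  p1 s a b x y = kern s y x * wlin a b x / wlin a b y.
Proof. by move=> s0; rewrite /p1 Rint_kw. Qed.

Lemma peakE (s : R) : 0 < s -> normal_peak s = (s * Num.sqrt (pi *+ 2))^-1.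
Proof.
move=> s0; rewrite /normal_peak -mulrnAr sqrtrM ?sqr_ge0// sqrtr_sqr gtr0_norm//.
Qed.

Lemma kern_conv (s1 s2 u z x : R) : 0 < s1 -> 0 < s2 ->
  kern s1 u z * kern s2 z x =
  kern (Num.sqrt (s1 ^+ 2 + s2 ^+ 2)) u x *
  kern (s1 * s2 / Num.sqrt (s1 ^+ 2 + s2 ^+ 2))
       ((u * s2 ^+ 2 + x * s1 ^+ 2) / (s1 ^+ 2 + s2 ^+ 2)) z.
Proof.
move=> s1p s2p.
have Q0 : 0 < s1 ^+ 2 + s2 ^+ 2 by rewrite addr_gt0 // exprn_gt0.
have S0 : 0 < Num.sqrt (s1 ^+ 2 + s2 ^+ 2) by rewrite sqrtr_gt0.
have t0 : 0 < s1 * s2 / Num.sqrt (s1 ^+ 2 + s2 ^+ 2) by rewrite !mulr_gt0 // invr_gt0.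
have c0 : 0 < Num.sqrt (pi *+ 2 : R) by rewrite sqrtr_gt0 pmulrn_lgt0 // pi_gt0.
rewrite !kernE ?gt_eqF // !peakE //.
rewrite mulrACA [in RHS]mulrACA; congr (_ * _).
  field; rewrite ?gt_eqF //.
rewrite /nf -!expRD; congr expR.
rewrite !exprMn exprVn !sqr_sqrtr ?ltW //.
field; rewrite ?gt_eqF //.
Qed.

Lemma KL (s1 s2 a b c u x : R) : 0 < s1 -> 0 < s2 ->
  \int[mu]_(z in setT) (c * p1 s1 a b z u * p1 s2 a b x z) =
  c * p1 (Num.sqrt (s1 ^+ 2 + s2 ^+ 2)) a b x u.
Proof.
move=> s1p s2p.
have Q0 : 0 < s1 ^+ 2 + s2 ^+ 2 by rewrite addr_gt0 // exprn_gt0.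
have S0 : 0 < Num.sqrt (s1 ^+ 2 + s2 ^+ 2) by rewrite sqrtr_gt0.
set S := Num.sqrt (s1 ^+ 2 + s2 ^+ 2) in S0 *.
set t := s1 * s2 / S.
set m := (u * s2 ^+ 2 + x * s1 ^+ 2) / (s1 ^+ 2 + s2 ^+ 2).
set w := wlin a b.
have -> : \int[mu]_(z in setT) (c * p1 s1 a b z u * p1 s2 a b x z) =
    \int[mu]_(z in setT) (c * (kern s1 u z * w z / w u) * (kern s2 z x * w x / w z)).
  by apply: eq_Rintegral => z _; rewrite !p1E ?gt_eqF.
rewrite p1E ?gt_eqF // -/w.
have [wu0|wu0] := eqVneq (w u) 0.
  rewrite wu0 invr0 !mulr0.
  transitivity (\int[mu]_(z in setT) (0 : R)).
    by apply: eq_Rintegral => z _; rewrite !mulr0 mul0r.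
  by rewrite Rintegral_cst // mul0r.
pose K := c * w x / w u * kern S u x.
have key z : w z != 0 ->
    c * (kern s1 u z * w z / w u) * (kern s2 z x * w x / w z) = K * kern t m z.
  move=> wz0; transitivity (c * w x / w u * (kern s1 u z * kern s2 z x)).
    by field; apply/andP.
  by rewrite kern_conv // /K -/S -/t -/m !mulrA.
have intK : \int[mu]_(z in setT) (K * kern t m z) =
    c * (kern S u x * w x / w u).
  rewrite RintegralZl //; last exact: integrable_kern.
  by rewrite Rint_kern mulr1 /K; field.
have [a0|a0] := eqVneq a 0.
  rewrite -intK; apply: eq_Rintegral => z _; apply: key.
  by move: wu0; rewrite /w /wlin a0 !mul0r.
pose r := - b / a.
have wr0 : w r = 0 by rewrite /w /wlin /r; field.
have wr z : z != r -> w z != 0.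
  apply: contraNN => /eqP wz; apply/eqP.
  move: wz; rewrite /w /wlin /r => wz.
  have -> : b = - (a * z) by apply/eqP; rewrite -addr_eq0 addrC wz.
  by field.
rewrite -intK.
transitivity (\int[mu]_(z in setT) ((fun z => K * kern t m z) \_ (setT `\ r)) z).
  apply: eq_Rintegral => z _; rewrite patchE; case: ifPn => [zin|zn].
    by apply: key; apply: wr; move: zin; rewrite inE => -[_ /eqP].
  have zr : z = r.
    by apply/eqP; apply: contraNT zn => /eqP zr; rewrite inE.
  rewrite zr wr0 invr0 !mulr0 ?mul0r ?mulr0; reflexivity.
rewrite -Rintegral_mkcond /Rintegral integral_setD1 //.
  exact: measurableD.
apply/measurable_EFinP; apply: measurable_funTS.
by apply: measurable_funM => //; exact: measurable_normal_pdf.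
Qed.

Lemma iter_int_ext (m : nat) (f g : seq R -> R) :
  (forall xs, size xs = m -> f xs = g xs) -> iter_int m f = iter_int m g.
Proof.
elim: m f g => [|m IH] f g H /=; first by rewrite H.
apply: eq_Rintegral => z _; apply: IH => xs Hs; apply: H; by rewrite /= Hs.
Qed.

Lemma claim (s a b x : R) (m : nat) : 0 < s -> forall (c u s' : R), 0 < s' ->
  iter_int m (fun xs => c *
    (\prod_(k < m) p1 s a b (nth 0 (u :: xs) k.+1) (nth 0 (u :: xs) k)) *
    p1 s' a b x (last u xs)) =
  c * p1 (Num.sqrt (s' ^+ 2 + m%:R * s ^+ 2)) a b x u.
Proof.
move=> s0; elim: m => [|m IH] c u s' s'0 /=.
  by rewrite big_ord0 mulr1 mul0r addr0 sqrtr_sqr gtr0_norm.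
have S0 : 0 < Num.sqrt (s' ^+ 2 + m%:R * s ^+ 2).
  rewrite sqrtr_gt0; apply: (lt_le_trans (exprn_gt0 2 s'0)); by rewrite lerDl mulr_ge0 // sqr_ge0.
transitivity (\int[mu]_(z in setT) (c * p1 s a b z u *
   p1 (Num.sqrt (s' ^+ 2 + m%:R * s ^+ 2)) a b x z)).
  apply: eq_Rintegral => z _; rewrite -(IH _ _ _ s'0).
  apply: iter_int_ext => xs _.
  by rewrite big_ord_recl /= !mulrA.
rewrite (@KL s _ a b c u x s0 S0).
have -> : s ^+ 2 + Num.sqrt (s' ^+ 2 + m%:R * s ^+ 2) ^+ 2 =
    s' ^+ 2 + m.+1%:R * s ^+ 2.
  rewrite sqr_sqrtr; last by rewrite addr_ge0 ?sqr_ge0 // mulr_ge0 // sqr_ge0.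
  rewrite -natr1 mulrDl mul1r.
  by rewrite [s ^+ 2 + _]addrCA [_ + s ^+ 2]addrC.
by [].
Qed.

Lemma nth_rc (y x : R) (xs : seq R) i : (i <= size xs)%N ->
  nth 0 (y :: rcons xs x) i = nth 0 (y :: xs) i.
Proof. by move=> H; rewrite -rcons_cons nth_rcons /= ltnS H. Qed.

Lemma nth_rc_last (y x : R) (xs : seq R) :
  nth 0 (y :: rcons xs x) (size xs).+1 = x.
Proof. by rewrite -rcons_cons nth_rcons /= ltnn eqxx. Qed.

End S.

Theorem theorem1 (R : realType) (a b : R) (n : nat) (s : R) (x y : R) :
  (0 < n)%N -> 0 < s ->
  0 < wlin a b x -> 0 < wlin a b y ->
  pn n s a b x y = p1 (Num.sqrt (n%:R) * s) a b x y.
Proof.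
case: n => [//|m] _ s0 _ _.
rewrite /pn.
transitivity (iter_int m (fun xs => 1 *
    (\prod_(k < m) p1 s a b (nth 0 (y :: xs) k.+1) (nth 0 (y :: xs) k)) *
    p1 s a b x (last y xs))).
  apply: iter_int_ext => xs; rewrite /= => Hs.
  rewrite mul1r big_ord_recr.
  congr (_ * _).
    apply: eq_bigr => k _.
    by rewrite /= nth_rcons Hs ltn_ord nth_rc // Hs ltnW.
  rewrite /= nth_rcons Hs ltnn eqxx nth_rc ?Hs //.
  by have := nth_last 0 (y :: xs); rewrite /= Hs => ->.
rewrite (@claim R s a b x m s0 1 y s s0) mul1r.
have -> : s ^+ 2 + m%:R * s ^+ 2 = m.+1%:R * s ^+ 2.
  by rewrite -natr1 mulrDl mul1r addrC.
by rewrite sqrtrM // sqrtr_sqr gtr0_norm.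
Qed.
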